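(* For every $n\geq 2$, $B_d^t(F_n)=1$.
   Context: A total dominator coloring (TD-coloring) of a graph $G$ with no isolated vertex is a proper vertex coloring of $G$ in which every vertex is adjacent to every vertex of some color class. The total dominator chromatic number $\chi_d^t(G)$ is the minimum number of colors in a TD-coloring of $G$. The TDC-bondage number $B_d^t(G)$ is the minimum number of edges of $G$ whose removal changes the total dominator chromatic number of $G$. The friendship graph $F_n$ ($n\ge2$) is obtained by joining $n$ copies of the cycle $C_3$ at a common vertex. *)

(* Defs.v *)
(* Simple graphs on a finType T given by a symmetric,
   irreflexive boolean adjacency relation e : rel T. *)
From mathcomp Require Import all_boot.
Set Implicit Arguments. Unset Strict Implicit. Unset Printing Implicit Defensive.

Section Graphs.
Variable T : finType.

Definition edges (e : rel T) : {set {set T}} :=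
  [set [set x; y] | x in T, y in T & e x y].

Definition remove_edges (e : rel T) (S : {set {set T}}) : rel T :=
  fun x y => e x y && ([set x; y] \notin S).

Definition no_isolated (e : rel T) : Prop := forall v : T, exists u : T, e v u.

(* TD-coloring with (at most) k colors: proper, and every vertex is adjacent
   to every vertex of some (nonempty) color class. *)
Definition TD_coloring (e : rel T) (k : nat) (c : T -> 'I_k) : Prop :=
  (forall x y, e x y -> c x <> c y) /\
  (forall v, exists i : 'I_k, (exists u, c u = i) /\ (forall u, c u = i -> e v u)).

Definition is_TDC_number (e : rel T) (k : nat) : Prop :=
  (exists c : T -> 'I_k, TD_coloring e c) /\
  (forall k' (c : T -> 'I_k'), TD_coloring e c -> k <= k').

(* removing the edge set S (yielding a graph without isolated vertices,
   where chi_d^t is defined) changes chi_d^t *)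
Definition changes_TDC (e : rel T) (S : {set {set T}}) : Prop :=
  no_isolated (remove_edges e S) /\
  forall k, is_TDC_number e k -> ~ is_TDC_number (remove_edges e S) k.

Definition is_TDC_bondage (e : rel T) (b : nat) : Prop :=
  (exists S : {set {set T}}, S \subset edges e /\ #|S| = b /\ changes_TDC e S) /\
  (forall S : {set {set T}}, S \subset edges e -> changes_TDC e S -> b <= #|S|).
End Graphs.

(* Friendship graph F_n: center None, triangle i has outer vertices
   Some (i,false), Some (i,true). *)
Definition friendship_adj (n : nat) : rel (option ('I_n * bool)) :=
  fun x y => match x, y with
  | None, None => false
  | None, Some _ | Some _, None => true
  | Some (i, a), Some (j, b) => (i == j) && (a != b)
  end.
Arguments friendship_adj n : clear implicits.

(* Main.v *)
Require Import Defs.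
From mathcomp Require Import all_boot.
From mathcomp Require Import zify.

Set Implicit Arguments. Unset Strict Implicit. Unset Printing Implicit Defensive.

Lemma TD_ext (T : finType) (e1 e2 : rel T) k (c : T -> 'I_k) :
  e1 =2 e2 -> TD_coloring e1 c -> TD_coloring e2 c.
Proof.
move=> H [P D]; split.
  by move=> x y; rewrite -H; exact: P.
move=> v; case: (D v) => i [[u Hu] A]; exists i; split; first by exists u.
by move=> u' /A; rewrite H.
Qed.

Definition col3 n (x : option ('I_n * bool)) : 'I_3 :=
  match x with
  | None => @Ordinal 3 0 isT
  | Some (_, false) => @Ordinal 3 1 isT
  | Some (_, true) => @Ordinal 3 2 isT
  end.

Lemma col3_TD n (i0 : 'I_n) : TD_coloring (friendship_adj n) (@col3 n).
Proof.
split.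
  move=> [[i a]|] [[j b]|] //=.
  - by case/andP=> _; case: a; case: b.
  - by case: a.
  - by case: b.
move=> [[j b]|].
  exists (@Ordinal 3 0 isT); split; first by exists None.
  by move=> [[i a]|] //=; case: a.
exists (@Ordinal 3 1 isT); split; first by exists (Some (i0, false)).
by move=> [[i a]|] //=; case: a.
Qed.

Lemma three_le k (c : 'I_k) (x y z : 'I_k) : x <> y -> x <> z -> y <> z -> 3 <= k.
Proof.
move=> H1 H2 H3.
have h1 : nat_of_ord x <> nat_of_ord y by move=> /val_inj.
have h2 : nat_of_ord x <> nat_of_ord z by move=> /val_inj.
have h3 : nat_of_ord y <> nat_of_ord z by move=> /val_inj.
have := ltn_ord x; have := ltn_ord y; have := ltn_ord z. lia.
Qed.

Lemma four_le k (w x y z : 'I_k) : w <> x -> w <> y -> w <> z ->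
  x <> y -> x <> z -> y <> z -> 4 <= k.
Proof.
move=> H1 H2 H3 H4 H5 H6.
have h1 : nat_of_ord w <> nat_of_ord x by move=> /val_inj.
have h2 : nat_of_ord w <> nat_of_ord y by move=> /val_inj.
have h3 : nat_of_ord w <> nat_of_ord z by move=> /val_inj.
have h4 : nat_of_ord x <> nat_of_ord y by move=> /val_inj.
have h5 : nat_of_ord x <> nat_of_ord z by move=> /val_inj.
have h6 : nat_of_ord y <> nat_of_ord z by move=> /val_inj.
have := ltn_ord w; have := ltn_ord x; have := ltn_ord y; have := ltn_ord z. lia.
Qed.

Lemma F_lower n (i0 : 'I_n) k (c : option ('I_n * bool) -> 'I_k) :
  TD_coloring (friendship_adj n) c -> 3 <= k.
Proof.
case=> P _.
apply: (@three_le k (c None) (c None) (c (Some (i0, false))) (c (Some (i0, true)))).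
- exact: P.
- exact: P.
- by apply: P => /=; rewrite eqxx.
Qed.

Lemma F_TDC n (i0 : 'I_n) : is_TDC_number (friendship_adj n) 3.
Proof.
split; first by exists (@col3 n); exact: col3_TD.
move=> k' c; exact: F_lower.
Qed.

Lemma notin_S (T : finType) (a x y z : T) :
  z != x -> z != y -> [set x; y] \notin [set [set a; z]].
Proof.
move=> h1 h2; rewrite in_set1; apply/negP => /eqP H.
have : z \in [set x; y] by rewrite H !inE eqxx orbT.
by rewrite !inE (negbTE h1) (negbTE h2).
Qed.

Lemma notin_S' (T : finType) (a x y z : T) :
  a != x -> a != y -> [set x; y] \notin [set [set a; z]].
Proof. by move=> h1 h2; rewrite (setUC [set a]); apply: notin_S. Qed.

Theorem mainTheorem14 (n : nat) (hn : 2 <= n) :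
  is_TDC_bondage (friendship_adj n) 1.
Proof.
have h0 : 0 < n by apply: leq_trans hn.
set i0 : 'I_n := Ordinal h0.
set i1 : 'I_n := Ordinal hn.
have hi : i0 != i1 by [].
set e := friendship_adj n.
set x0 : option ('I_n * bool) := Some (i0, false).
set x1 : option ('I_n * bool) := Some (i0, true).
set S := [set [set (None : option ('I_n * bool)); x0]].
split.
  exists S; split; [|split].
  - rewrite sub1set; apply/imset2P; exists None x0 => //; by rewrite inE.
  - by rewrite /S cards1.
  split.
    move=> [[j b]|].
      exists (Some (j, ~~ b)); rewrite /remove_edges /= eqxx; case: b => /=;
      by rewrite /S; apply: notin_S'.
    exists x1; rewrite /remove_edges /=; rewrite /S; apply: notin_S => //.
  move=> k Hk [[c [P D]] _].
  have k3 : k <= 3 by case: Hk => _ /(_ 3 (@col3 n) (col3_TD i0)).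
  have Ex0 : forall u, remove_edges e S x0 u -> u = x1.
    move=> [[j b]|]; rewrite /remove_edges /=.
      by case/andP=> /andP[/eqP <- ]; case: b.
    by rewrite /S in_set1 (setUC [set x0]) eqxx.
  have Cx1 : forall u, c u = c x1 -> u = x1.
    case: (D x0) => i [[u0 Hu0] A].
    have u0e : u0 = x1 by apply: Ex0; apply: A.
    move=> u Hu; apply: Ex0; apply: A; rewrite Hu -Hu0 u0e //.
  have ne : forall u, u <> x1 -> c u <> c x1 by move=> u h /Cx1.
  have N1 : (None : option ('I_n * bool)) <> x1 by [].
  have N2 : Some (i1, false) <> x1 by move=> h; move: hi; rewrite /x1 in h; by case: h.
  have N3 : Some (i1, true) <> x1 by move=> h; move: hi; rewrite /x1 in h; by case: h.
  have Hx : forall b, x0 != Some (i1, b).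
    by move=> b; apply/eqP => h; move: hi; rewrite /x0 in h; by case: h.
  have : 4 <= k.
    apply: (@four_le k (c x1) (c None) (c (Some (i1, false))) (c (Some (i1, true)))).
    - by move=> h; apply: (ne _ N1); rewrite h.
    - by move=> h; apply: (ne _ N2); rewrite h.
    - by move=> h; apply: (ne _ N3); rewrite h.
    - by apply: P; rewrite /remove_edges /=; rewrite /S; apply: notin_S.
    - by apply: P; rewrite /remove_edges /=; rewrite /S; apply: notin_S.
    - by apply: P; rewrite /remove_edges /=; rewrite /S; apply: notin_S'.
  lia.
move=> S' _ [_ H].
rewrite lt0n; apply/negP => /eqP/cards0_eq S0.
apply: (H 3 (F_TDC i0)); split.
  exists (@col3 n); apply: TD_ext (col3_TD i0).
  by move=> x y; rewrite /remove_edges S0 in_set0 andbT.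
move=> k' c Hc; apply: (@F_lower n i0 k' c); apply: TD_ext Hc.
by move=> x y; rewrite /remove_edges S0 in_set0 andbT.
Qed.
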